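(* Let $\Gamma\subset X\times X$ with $\Gamma\subset\{(x,y):d_L(x,y)<+\infty\}$ and let $\Gamma'$ be defined from $\Gamma$ as in the context. Then: (1) $\Gamma\subset\Gamma'\subset\{(x,y):d_L(x,y)<+\infty\}$; (2) if $\Gamma$ is analytic, then $\Gamma'$ is analytic; (3) if $\Gamma$ is $d_L$-cyclically monotone, then $\Gamma'$ is $d_L$-cyclically monotone.
   Context: $(X,d)$ is a Polish space and $d_L:X\times X\to[0,+\infty]$ is a distance on $X$ (it may take the value $+\infty$) which is a Borel function on $(X\times X,d\times d)$. A set $A\subset Y$ of a Polish space is analytic if it is the projection of a Borel subset of $Y\times Z$ for some Polish $Z$. A set $\Gamma\subset X\times X$ is $d_L$-cyclically monotone if for every $n$ and all $(x_0,y_0),\dots,(x_n,y_n)\in\Gamma$ one has $\sum_{i=0}^n d_L(x_i,y_i)\le\sum_{i=0}^n d_L(x_{i+1},y_i)$, where $x_{n+1}=x_0$. Given $\Gamma$, define $\Gamma'$ as the set of pairs $(x,y)$ for which there exist $I\in\{0,1,2,\dots\}$ and points $(w_i,z_i)\in\Gamma$, $i=0,\dots,I$, with $w_0=x$, $z_I=y$, and, setting $w_{I+1}:=w_0$, $\sum_{i=0}^I\big(d_L(w_{i+1},z_i)-d_L(w_i,z_i)\big)=0$. *)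

(* Defs.v *)
From Stdlib Require Import Reals Lra Arith.
Open Scope R_scope.

Definition is_metric {X : Type} (d : X -> X -> R) : Prop :=
  (forall x y, 0 <= d x y) /\
  (forall x y, d x y = 0 <-> x = y) /\
  (forall x y, d x y = d y x) /\
  (forall x y z, d x z <= d x y + d y z).

Definition cauchy_seq {X : Type} (d : X -> X -> R) (u : nat -> X) : Prop :=
  forall eps, 0 < eps -> exists N, forall m n, (N <= m)%nat -> (N <= n)%nat -> d (u m) (u n) < eps.

Definition converges_to {X : Type} (d : X -> X -> R) (u : nat -> X) (l : X) : Prop :=
  forall eps, 0 < eps -> exists N, forall n, (N <= n)%nat -> d (u n) l < eps.

Definition complete {X : Type} (d : X -> X -> R) : Prop :=
  forall u, cauchy_seq d u -> exists l, converges_to d u l.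

(* countable dense subset (option allows the empty space) *)
Definition separable {X : Type} (d : X -> X -> R) : Prop :=
  exists u : nat -> option X, forall x eps, 0 < eps ->
    exists n y, u n = Some y /\ d x y < eps.

Definition polish {X : Type} (d : X -> X -> R) : Prop :=
  is_metric d /\ complete d /\ separable d.

Definition metric_open {X : Type} (d : X -> X -> R) (U : X -> Prop) : Prop :=
  forall x, U x -> exists eps, 0 < eps /\ forall y, d x y < eps -> U y.

Definition prod_dist {X Y : Type} (d1 : X -> X -> R) (d2 : Y -> Y -> R)
  (p q : X * Y) : R := Rmax (d1 (fst p) (fst q)) (d2 (snd p) (snd q)).

Definition is_sigma_algebra {T : Type} (S : (T -> Prop) -> Prop) : Prop :=
  S (fun _ => False) /\
  (forall A, S A -> S (fun x => ~ A x)) /\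
  (forall A : nat -> T -> Prop, (forall n, S (A n)) -> S (fun x => exists n, A n x)).

Definition borel {T : Type} (opn : (T -> Prop) -> Prop) (A : T -> Prop) : Prop :=
  forall S, is_sigma_algebra S -> (forall U, opn U -> S U) -> S A.

Inductive ereal : Type := Fin : R -> ereal | PInf : ereal.

Definition eadd (a b : ereal) : ereal :=
  match a, b with Fin x, Fin y => Fin (x + y) | _, _ => PInf end.

Definition ele (a b : ereal) : Prop :=
  match a, b with
  | Fin x, Fin y => x <= y
  | _, PInf => True
  | PInf, Fin _ => False
  end.

Definition ereal_open (U : ereal -> Prop) : Prop :=
  (forall r, U (Fin r) -> exists eps, 0 < eps /\ forall s, Rabs (s - r) < eps -> U (Fin s)) /\
  (U PInf -> exists M, forall s, M < s -> U (Fin s)).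

Fixpoint esum (f : nat -> ereal) (n : nat) : ereal :=
  match n with
  | O => f O
  | S k => eadd (esum f k) (f (S k))
  end.

Definition ext_distance {X : Type} (dL : X -> X -> ereal) : Prop :=
  (forall x y r, dL x y = Fin r -> 0 <= r) /\
  (forall x y, dL x y = Fin 0 <-> x = y) /\
  (forall x y, dL x y = dL y x) /\
  (forall x y z, ele (dL x z) (eadd (dL x y) (dL y z))).

Definition borel_fun {X : Type} (d : X -> X -> R) (dL : X -> X -> ereal) : Prop :=
  forall B, borel ereal_open B ->
    borel (metric_open (prod_dist d d)) (fun p : X * X => B (dL (fst p) (snd p))).

Definition analytic {Y : Type} (dY : Y -> Y -> R) (A : Y -> Prop) : Prop :=
  exists (Z : Type) (dZ : Z -> Z -> R), polish dZ /\
    exists B : Y * Z -> Prop, borel (metric_open (prod_dist dY dZ)) B /\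
      forall y, A y <-> exists z, B (y, z).

Definition cyc_next {X : Type} (x : nat -> X) (n i : nat) : X :=
  if Nat.eqb i n then x O else x (S i).

Definition cyc_mono {X : Type} (dL : X -> X -> ereal) (G : X * X -> Prop) : Prop :=
  forall (n : nat) (x y : nat -> X),
    (forall i, (i <= n)%nat -> G (x i, y i)) ->
    ele (esum (fun i => dL (x i) (y i)) n)
        (esum (fun i => dL (cyc_next x n i) (y i)) n).

(* Gamma': sum_{i=0}^I (d_L(w_{i+1},z_i) - d_L(w_i,z_i)) = 0, written as the
   equality of the two (extended) sums *)
Definition Gprime {X : Type} (dL : X -> X -> ereal) (G : X * X -> Prop) (p : X * X) : Prop :=
  exists (I : nat) (w z : nat -> X),
    (forall i, (i <= I)%nat -> G (w i, z i)) /\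
    w O = fst p /\ z I = snd p /\
    esum (fun i => dL (cyc_next w I i) (z i)) I = esum (fun i => dL (w i) (z i)) I.

(* Main.v *)
Require Import Defs.
From Stdlib Require Import Reals Lra Lia Arith List Cantor Classical ClassicalEpsilon FunctionalExtensionality PropExtensionality.
Import ListNotations.
Open Scope R_scope.

Lemma eadd_comm a b : eadd a b = eadd b a.
Proof. destruct a, b; simpl; auto. f_equal; ring. Qed.
Lemma eadd_assoc a b c : eadd a (eadd b c) = eadd (eadd a b) c.
Proof. destruct a, b, c; simpl; auto. f_equal; ring. Qed.
Lemma eadd_0_l a : eadd (Fin 0) a = a.
Proof. destruct a; simpl; auto. f_equal; ring. Qed.
Lemma eadd_0_r a : eadd a (Fin 0) = a.
Proof. destruct a; simpl; auto. f_equal; ring. Qed.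
Lemma ele_cancel s a b : ele (eadd (Fin s) a) (eadd (Fin s) b) -> ele a b.
Proof. destruct a, b; simpl; auto; lra. Qed.
Lemma eadd_fin_inv a b r : eadd a b = Fin r -> exists x y, a = Fin x /\ b = Fin y.
Proof. destruct a, b; simpl; try discriminate; eauto. Qed.
Lemma ele_fin a r : ele a (Fin r) -> exists x, a = Fin x.
Proof. destruct a; simpl; eauto; tauto. Qed.

Fixpoint lsum (l : list ereal) : ereal :=
  match l with [] => Fin 0 | a :: t => eadd a (lsum t) end.

Lemma lsum_app l m : lsum (l ++ m) = eadd (lsum l) (lsum m).
Proof. induction l; cbn [app lsum]. now rewrite eadd_0_l. now rewrite IHl, eadd_assoc. Qed.

Lemma esum_ext f g n : (forall i, (i <= n)%nat -> f i = g i) -> esum f n = esum g n.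
Proof. induction n; intros H; simpl. apply H; lia. rewrite IHn, H; auto. Qed.

Lemma esum_seq f n : esum f n = lsum (map f (seq 0 (S n))).
Proof.
  induction n. simpl. now rewrite eadd_0_r.
  cbn [esum]. rewrite IHn. rewrite (seq_S (S n) 0), map_app, lsum_app. cbn [map lsum]. now rewrite eadd_0_r.
Qed.

Lemma esum_fin f g n : (forall i, (i <= n)%nat -> f i = Fin (g i)) -> esum f n = Fin (sum_f_R0 g n).
Proof. induction n; intros H; simpl. apply H; lia. rewrite IHn, H; auto. Qed.

Lemma esum_fin_terms f n r : esum f n = Fin r -> forall i, (i <= n)%nat -> exists x, f i = Fin x.
Proof.
  revert r; induction n; intros r H i Hi; simpl in H.
  - replace i with 0%nat by lia. eauto.
  - destruct (eadd_fin_inv _ _ _ H) as (x & y & H1 & H2).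
    destruct (Nat.eq_dec i (S n)). subst; eauto. eapply IHn; eauto. lia.
Qed.

Lemma esum_all_fin f n : (forall i, (i <= n)%nat -> f i <> PInf) -> exists r, esum f n = Fin r.
Proof.
  induction n; intros H; simpl. destruct (f 0%nat) eqn:E; eauto. exfalso; eapply H; eauto.
  destruct IHn as [r Hr]. intros; apply H; lia. rewrite Hr.
  destruct (f (S n)) eqn:E. simpl; eauto. exfalso; eapply (H (S n)); eauto.
Qed.


Lemma last_map {A B} (f : A -> B) l d : last (map f l) (f d) = f (last l d).
Proof. induction l as [|a l IH]; simpl; auto. destruct l; simpl in *; auto. Qed.
Lemma last_app_ne {A} (l m : list A) d : m <> [] -> last (l ++ m) d = last m d.
Proof. intros Hm. induction l as [|a l IH]; simpl; auto. rewrite IH. destruct l, m; simpl; congruence. Qed.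
Lemma hd_app_ne {A} (l m : list A) d : l <> [] -> hd d (l ++ m) = hd d l.
Proof. destruct l; simpl; congruence. Qed.
Lemma last_indep {A} (l : list A) d d' : l <> [] -> last l d = last l d'.
Proof. induction l as [|a l IH]; simpl; intros H; [congruence|]. destruct l; auto. apply IH; congruence. Qed.
Lemma last_seq d n : last (seq 0 (S n)) d = n.
Proof. rewrite seq_S, last_last. lia. Qed.
Lemma map_nth_seq_self {A} (L : list A) d : map (fun i => nth i L d) (seq 0 (length L)) = L.
Proof.
  induction L as [|a L IH]; simpl; auto. f_equal.
  rewrite <- seq_shift, map_map. simpl. exact IH.
Qed.

Definition cost {X} (dL : X -> X -> ereal) (L : list (X*X)) : ereal :=
  lsum (map (fun p => dL (fst p) (snd p)) L).
Fixpoint inner {X} (dL : X -> X -> ereal) (L : list (X*X)) : ereal :=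
  match L with
  | p :: ((q :: _) as t) => eadd (dL (fst q) (snd p)) (inner dL t)
  | _ => Fin 0
  end.
Definition ncost {X} (dL : X -> X -> ereal) (L : list (X*X)) : ereal :=
  match L with [] => Fin 0 | p :: _ => eadd (inner dL L) (dL (fst p) (snd (last L p))) end.
Definition mpairs {X} (x y : nat -> X) a m := map (fun i => (x i, y i)) (seq a m).

Lemma cost_app {X} (dL : X -> X -> ereal) A B : cost dL (A ++ B) = eadd (cost dL A) (cost dL B).
Proof. unfold cost. now rewrite map_app, lsum_app. Qed.

Lemma inner_cons2 {X} (dL : X -> X -> ereal) p q t :
  inner dL (p :: q :: t) = eadd (dL (fst q) (snd p)) (inner dL (q :: t)).
Proof. reflexivity. Qed.
Lemma inner_one {X} (dL : X -> X -> ereal) p : inner dL [p] = Fin 0.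
Proof. reflexivity. Qed.

Lemma inner_app {X} (dL : X -> X -> ereal) A B p : A <> [] -> B <> [] ->
  inner dL (A ++ B) = eadd (inner dL A) (eadd (dL (fst (hd p B)) (snd (last A p))) (inner dL B)).
Proof.
  intros HA HB. induction A as [|a A IH]; [congruence|].
  destruct A as [|a' A].
  - destruct B as [|b B]; [congruence|]. simpl app. rewrite inner_cons2, inner_one, eadd_0_l. reflexivity.
  - change ((a :: a' :: A) ++ B) with (a :: a' :: (A ++ B)).
    rewrite !inner_cons2. rewrite <- (eadd_assoc (dL (fst a') (snd a))).
    change (a' :: A ++ B) with ((a' :: A) ++ B). rewrite IH by congruence.
    reflexivity.
Qed.

Lemma inner_mpairs {X} (dL : X -> X -> ereal) x y a m :
  inner dL (mpairs x y a (S m)) = lsum (map (fun i => dL (x (S i)) (y i)) (seq a m)).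
Proof.
  revert a; induction m; intros a; simpl; auto.
  unfold mpairs in IHm. rewrite <- IHm. simpl. auto.
Qed.

Lemma cost_mpairs {X} (dL : X -> X -> ereal) x y n :
  esum (fun i => dL (x i) (y i)) n = cost dL (mpairs x y 0 (S n)).
Proof. rewrite esum_seq. unfold cost, mpairs. now rewrite map_map. Qed.

Lemma ncost_mpairs {X} (dL : X -> X -> ereal) x y n :
  esum (fun i => dL (cyc_next x n i) (y i)) n = ncost dL (mpairs x y 0 (S n)).
Proof.
  unfold ncost. unfold mpairs at 1. cbn [seq map]. fold (mpairs x y 1 n).
  change ((x 0%nat, y 0%nat) :: mpairs x y 1 n) with (mpairs x y 0 (S n)).
  rewrite inner_mpairs.
  replace (last (mpairs x y 0 (S n)) (x 0%nat, y 0%nat)) with (x n, y n).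
  2:{ unfold mpairs. rewrite (last_map (fun i => (x i, y i)) _ 0%nat). now rewrite last_seq. }
  simpl fst; simpl snd.
  destruct n.
  - cbn [esum seq map lsum]. rewrite eadd_0_l. reflexivity.
  - cbn [esum]. unfold cyc_next at 2. rewrite Nat.eqb_refl.
    rewrite (esum_ext _ (fun i => dL (x (S i)) (y i))).
    + rewrite esum_seq. auto.
    + intros i Hi. unfold cyc_next. destruct (Nat.eqb_spec i (S n)); [lia|auto].
Qed.

Lemma cm_list {X} (dL : X -> X -> ereal) G : cyc_mono dL G ->
  forall L, L <> [] -> Forall G L -> ele (cost dL L) (ncost dL L).
Proof.
  intros H L HL HF. destruct L as [|p L']; [congruence|].
  set (n := length L').
  set (x := fun i => fst (nth i (p :: L') p)). set (y := fun i => snd (nth i (p :: L') p)).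
  assert (E : mpairs x y 0 (S n) = p :: L').
  { unfold mpairs, x, y. transitivity (map (fun i => nth i (p :: L') p) (seq 0 (length (p :: L')))).
    apply map_ext. intros; now destruct (nth _ _ _). apply map_nth_seq_self. }
  specialize (H n x y). rewrite cost_mpairs, ncost_mpairs, E in H. apply H.
  intros i Hi. rewrite Forall_forall in HF. unfold x, y.
  destruct (nth i (p :: L') p) eqn:En. simpl. rewrite <- En. apply HF, nth_In. simpl; lia.
Qed.

Lemma gprime_list {X} (dL : X -> X -> ereal) G p : Gprime dL G p ->
  exists C, C <> [] /\ Forall G C /\ fst (hd p C) = fst p /\ snd (last C p) = snd p
            /\ ncost dL C = cost dL C.
Proof.
  intros (I & w & z & HG & H0 & HI & Heq).
  exists (mpairs w z 0 (S I)). repeat split.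
  - unfold mpairs; simpl; congruence.
  - apply Forall_forall. intros q Hq. unfold mpairs in Hq. apply in_map_iff in Hq.
    destruct Hq as (i & <- & Hi). apply in_seq in Hi. apply HG; lia.
  - simpl. auto.
  - unfold mpairs. rewrite <- HI.
    rewrite (last_indep _ p (w 0%nat, z 0%nat)) by (simpl; congruence).
    rewrite (last_map (fun i => (w i, z i)) _ 0%nat), last_seq. reflexivity.
  - rewrite <- ncost_mpairs, <- cost_mpairs. auto.
Qed.


Lemma part1a {X} (dL : X -> X -> ereal) (G : X*X -> Prop) p : G p -> Gprime dL G p.
Proof.
  intros Hp. exists 0%nat, (fun _ => fst p), (fun _ => snd p). repeat split; auto.
  intros i Hi. now destruct p.
Qed.

Lemma tri_fin {X} (dL : X -> X -> ereal) (HdL : ext_distance dL) x y z :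
  dL x y <> PInf -> dL y z <> PInf -> dL x z <> PInf.
Proof.
  destruct HdL as (_ & _ & _ & Ht). intros H1 H2 H3. specialize (Ht x y z). rewrite H3 in Ht.
  destruct (dL x y), (dL y z); simpl in Ht; congruence.
Qed.

Lemma gprime_terms_fin {X} (dL : X -> X -> ereal) (G : X*X -> Prop)
  (Hfin : forall p, G p -> dL (fst p) (snd p) <> PInf) I w z :
  (forall i, (i <= I)%nat -> G (w i, z i)) ->
  esum (fun i => dL (cyc_next w I i) (z i)) I = esum (fun i => dL (w i) (z i)) I ->
  forall i, (i <= I)%nat -> dL (cyc_next w I i) (z i) <> PInf.
Proof.
  intros HG Heq i Hi. destruct (esum_all_fin (fun i => dL (w i) (z i)) I) as [r Hr].
  { intros j Hj. apply (Hfin (w j, z j)), HG, Hj. }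
  rewrite Hr in Heq. destruct (esum_fin_terms _ _ _ Heq i Hi) as [x Hx]. congruence.
Qed.

Lemma part1b {X} (dL : X -> X -> ereal) (HdL : ext_distance dL) (G : X*X -> Prop)
  (Hfin : forall p, G p -> dL (fst p) (snd p) <> PInf) p :
  Gprime dL G p -> dL (fst p) (snd p) <> PInf.
Proof.
  intros (I & w & z & HG & H0 & HI & Heq). rewrite <- H0, <- HI.
  assert (Hs := gprime_terms_fin dL G Hfin I w z HG Heq).
  assert (Hsym : forall a b, dL a b = dL b a) by apply HdL.
  enough (forall j, (j <= I)%nat -> dL (w 0%nat) (z j) <> PInf) by auto.
  induction j; intros Hj.
  - apply (Hfin (w 0%nat, z 0%nat)), HG; lia.
  - apply (tri_fin dL HdL _ (w (S j))).
    + apply (tri_fin dL HdL _ (z j)). apply IHj; lia.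
      rewrite Hsym. specialize (Hs j ltac:(lia)). unfold cyc_next in Hs.
      destruct (Nat.eqb_spec j I); [lia|auto].
    + apply (Hfin (w (S j), z (S j))), HG; lia.
Qed.

Lemma hd_indep {A} (l : list A) d d' : l <> [] -> hd d l = hd d' l.
Proof. destruct l; simpl; congruence. Qed.

Lemma ncost_eq {X} (dL : X -> X -> ereal) L d : L <> [] ->
  ncost dL L = eadd (inner dL L) (dL (fst (hd d L)) (snd (last L d))).
Proof. destruct L as [|c L]; [congruence|]. intros _. unfold ncost. simpl hd.
  rewrite (last_indep _ c d) by congruence. reflexivity. Qed.

Definition flat_ok {X} (qc : (X*X) * list (X*X)) : Prop :=
  snd qc <> [] /\ fst (hd (fst qc) (snd qc)) = fst (fst qc) /\ snd (last (snd qc) (fst qc)) = snd (fst qc).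

Lemma flat_inner {X} (dL : X -> X -> ereal) (K : list ((X*X) * list (X*X))) :
  K <> [] -> Forall flat_ok K ->
  inner dL (flat_map snd K) = eadd (lsum (map (fun qc => inner dL (snd qc)) K)) (inner dL (map fst K))
  /\ flat_map snd K <> []
  /\ (forall d, fst (hd d (flat_map snd K)) = fst (hd d (map fst K)))
  /\ (forall d, snd (last (flat_map snd K) d) = snd (last (map fst K) d)).
Proof.
  induction K as [|[q C] K IH]; [congruence|]. intros _ HF.
  inversion HF as [|? ? [HC1 [HC2 HC3]] HF']; subst. simpl fst in *; simpl snd in *.
  destruct K as [|[q' C'] K].
  - simpl flat_map. rewrite app_nil_r. simpl map. cbn [lsum]. rewrite inner_one, !eadd_0_r.
    repeat split; auto.
    + intros d. simpl. rewrite (hd_indep C d q) by auto. auto.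
    + intros d. simpl. rewrite (last_indep C d q) by auto. auto.
  - destruct (IH ltac:(congruence) HF') as (I1 & I2 & I3 & I4).
    change (flat_map snd ((q, C) :: (q', C') :: K)) with (C ++ flat_map snd ((q', C') :: K)).
    repeat split.
    + rewrite (inner_app dL _ _ q) by auto. rewrite I1, I3.
      change (map fst ((q, C) :: (q', C') :: K)) with (q :: q' :: map fst K).
      rewrite inner_cons2. change (q' :: map fst K) with (map fst ((q', C') :: K)).
      cbn [map lsum hd fst snd]. rewrite HC3.
      set (a := inner dL C). set (S' := lsum _). set (D := dL (fst q') (snd q)). set (IK := inner dL _).
      match goal with |- eadd ?a (eadd ?D (eadd ?X ?Y)) = _ =>
        rewrite (eadd_assoc D X Y), (eadd_comm D X), <- (eadd_assoc X D Y), (eadd_assoc a X) end.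
      reflexivity.
    + destruct C; simpl; congruence.
    + intros d. rewrite hd_app_ne by auto. rewrite (hd_indep C d q) by auto. simpl. auto.
    + intros d. rewrite last_app_ne by auto. rewrite I4. reflexivity.
Qed.

Lemma cost_flat {X} (dL : X -> X -> ereal) (K : list ((X*X) * list (X*X))) :
  cost dL (flat_map snd K) = lsum (map (fun qc => cost dL (snd qc)) K).
Proof. induction K; simpl. reflexivity. rewrite cost_app, IHK. reflexivity. Qed.

Lemma lsum_map_add {A} (f g : A -> ereal) l :
  lsum (map (fun a => eadd (f a) (g a)) l) = eadd (lsum (map f l)) (lsum (map g l)).
Proof.
  induction l; cbn [map lsum]. now rewrite eadd_0_l. rewrite IHl.
  rewrite !eadd_assoc. f_equal. rewrite <- !eadd_assoc. f_equal. apply eadd_comm.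
Qed.

Lemma lsum_fin l : (forall a, In a l -> exists r, a = Fin r) -> exists r, lsum l = Fin r.
Proof.
  induction l; simpl; intros H. eauto. destruct IHl as [r Hr]. intros; apply H; auto.
  destruct (H a) as [s Hs]; auto. rewrite Hr, Hs. simpl. eauto.
Qed.

Lemma cost_fin {X} (dL : X -> X -> ereal) (G : X*X -> Prop)
  (Hfin : forall p, G p -> dL (fst p) (snd p) <> PInf) C : Forall G C -> exists r, cost dL C = Fin r.
Proof.
  intros HF. apply lsum_fin. intros a Ha. apply in_map_iff in Ha. destruct Ha as (p & <- & Hp).
  rewrite Forall_forall in HF. specialize (Hfin p (HF p Hp)). destruct (dL _ _); eauto. congruence.
Qed.

Lemma part3 {X} (dL : X -> X -> ereal) (G : X*X -> Prop)
  (Hfin : forall p, G p -> dL (fst p) (snd p) <> PInf) :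
  cyc_mono dL G -> cyc_mono dL (Gprime dL G).
Proof.
  intros Hcm n x y Hxy.
  assert (HC : forall j, exists C, (j <= n)%nat -> (C <> [] /\ Forall G C /\ fst (hd (x j, y j) C) = x j
     /\ snd (last C (x j, y j)) = y j /\ ncost dL C = cost dL C)).
  { intros j. destruct (le_dec j n) as [Hj|Hj].
    - destruct (gprime_list dL G _ (Hxy j Hj)) as [C HC]. exists C; auto.
    - exists []; intros; lia. }
  set (Cf := fun j => proj1_sig (constructive_indefinite_description _ (HC j))).
  assert (HCf : forall j, (j <= n)%nat -> Cf j <> [] /\ Forall G (Cf j) /\ fst (hd (x j, y j) (Cf j)) = x j
     /\ snd (last (Cf j) (x j, y j)) = y j /\ ncost dL (Cf j) = cost dL (Cf j)).
  { intros j. exact (proj2_sig (constructive_indefinite_description _ (HC j))). }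
  clearbody Cf.
  set (K := map (fun j => ((x j, y j), Cf j)) (seq 0 (S n))).
  assert (HK1 : map fst K = mpairs x y 0 (S n)) by (unfold K, mpairs; now rewrite map_map).
  assert (HKin : forall qc, In qc K -> exists j, (j <= n)%nat /\ qc = ((x j, y j), Cf j)).
  { intros qc Hq. unfold K in Hq. apply in_map_iff in Hq. destruct Hq as (j & <- & Hj).
    apply in_seq in Hj. exists j; split; auto; lia. }
  assert (HKne : K <> []) by (unfold K; simpl; congruence).
  assert (HKok : Forall flat_ok K).
  { apply Forall_forall. intros qc Hq. destruct (HKin qc Hq) as (j & Hj & ->).
    destruct (HCf j Hj) as (H1 & H2 & H3 & H4 & H5). repeat split; auto. }
  destruct (flat_inner dL K HKne HKok) as (I1 & I2 & I3 & I4).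
  assert (HFG : Forall G (flat_map snd K)).
  { apply Forall_forall. intros p Hp. apply in_flat_map in Hp. destruct Hp as (qc & Hq & Hp).
    destruct (HKin qc Hq) as (j & Hj & ->). destruct (HCf j Hj) as (H1 & H2 & _).
    rewrite Forall_forall in H2. auto. }
  assert (Hcl := cm_list dL G Hcm _ I2 HFG).
  destruct (lsum_fin (map (fun qc => inner dL (snd qc)) K)) as [s Hs].
  { intros a Ha. apply in_map_iff in Ha. destruct Ha as (qc & <- & Hq).
    destruct (HKin qc Hq) as (j & Hj & ->). destruct (HCf j Hj) as (H1 & H2 & H3 & H4 & H5).
    destruct (cost_fin dL G Hfin _ H2) as [r Hr]. rewrite <- H5 in Hr.
    rewrite (ncost_eq dL _ (x j, y j) H1) in Hr. apply eadd_fin_inv in Hr.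
    destruct Hr as (a & b & Ha & _). simpl. eauto. }
  assert (Ecost : cost dL (flat_map snd K) = eadd (Fin s) (cost dL (map fst K))).
  { rewrite cost_flat, <- Hs.
    rewrite (map_ext_in _ (fun qc => eadd (inner dL (snd qc)) (dL (fst (fst qc)) (snd (fst qc))))).
    - rewrite lsum_map_add. unfold cost. rewrite map_map. reflexivity.
    - intros qc Hq. destruct (HKin qc Hq) as (j & Hj & ->). destruct (HCf j Hj) as (H1 & H2 & H3 & H4 & H5).
      simpl. rewrite <- H5, (ncost_eq dL _ (x j, y j) H1), H3, H4. reflexivity. }
  assert (Encost : ncost dL (flat_map snd K) = eadd (Fin s) (ncost dL (map fst K))).
  { assert (HmK : map fst K <> []) by (destruct K; simpl; congruence).
    rewrite (ncost_eq dL _ (x 0%nat, y 0%nat) I2), (ncost_eq dL _ (x 0%nat, y 0%nat) HmK).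
    rewrite I1, I3, I4, Hs. rewrite eadd_assoc. reflexivity. }
  rewrite cost_mpairs, ncost_mpairs, <- HK1. rewrite Ecost, Encost in Hcl.
  eapply ele_cancel; eauto.
Qed.


Definition Rd (x y : R) := Rabs (x - y).

Definition cont {A B} (dA : A -> A -> R) (dB : B -> B -> R) (f : A -> B) : Prop :=
  forall a eps, 0 < eps -> exists delta, 0 < delta /\ forall a', dA a a' < delta -> dB (f a) (f a') < eps.

Lemma borel_ext {T} (op : (T -> Prop) -> Prop) (A B : T -> Prop) :
  (forall x, A x <-> B x) -> borel op A -> borel op B.
Proof.
  intros H HA. replace B with A; auto. apply functional_extensionality; intros x.
  apply propositional_extensionality; auto.
Qed.
Lemma borel_open {T} (op : (T -> Prop) -> Prop) U : op U -> borel op U.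
Proof. intros H S _ HS. auto. Qed.
Lemma borel_False {T} (op : (T -> Prop) -> Prop) : borel op (fun _ => False).
Proof. intros S HS _. apply HS. Qed.
Lemma borel_compl {T} (op : (T -> Prop) -> Prop) A : borel op A -> borel op (fun x => ~ A x).
Proof. intros H S HS Hop. apply HS. apply H; auto. Qed.
Lemma borel_cunion {T} (op : (T -> Prop) -> Prop) (A : nat -> T -> Prop) :
  (forall n, borel op (A n)) -> borel op (fun x => exists n, A n x).
Proof. intros H S HS Hop. apply HS. intros n; apply H; auto. Qed.
Lemma borel_True {T} (op : (T -> Prop) -> Prop) : borel op (fun _ => True).
Proof. eapply borel_ext; [|apply borel_compl, borel_False]. simpl; tauto. Qed.
Lemma borel_cinter {T} (op : (T -> Prop) -> Prop) (A : nat -> T -> Prop) :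
  (forall n, borel op (A n)) -> borel op (fun x => forall n, A n x).
Proof.
  intros H. eapply borel_ext; [|apply borel_compl, borel_cunion; intros n; apply borel_compl, H].
  intros x; split.
  - intros H1 n. apply NNPP. intros H2. apply H1. eauto.
  - intros H1 [n Hn]. auto.
Qed.
Lemma borel_inter2 {T} (op : (T -> Prop) -> Prop) A B :
  borel op A -> borel op B -> borel op (fun x => A x /\ B x).
Proof.
  intros HA HB. eapply borel_ext; [|apply (borel_cinter op (fun n x => if Nat.eqb n 0 then A x else B x))].
  - intros x; split. intros H; split; [apply (H 0%nat)|apply (H 1%nat)].
    intros [H1 H2] n; destruct (Nat.eqb n 0); auto.
  - intros n; destruct (Nat.eqb n 0); auto.
Qed.

Lemma cont_open {A B} dA dB (f : A -> B) U : cont dA dB f -> metric_open dB U -> metric_open dA (fun a => U (f a)).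
Proof.
  intros Hf HU a Ha. destruct (HU _ Ha) as (e & He & H). destruct (Hf a e He) as (dl & Hdl & H').
  exists dl; split; auto.
Qed.

Lemma borel_pre {A B} dA dB (f : A -> B) S : cont dA dB f -> borel (metric_open dB) S ->
  borel (metric_open dA) (fun a => S (f a)).
Proof.
  intros Hf HS SA HSA Hop. apply (HS (fun T => SA (fun a => T (f a)))).
  - destruct HSA as (H1 & H2 & H3). split; [exact H1|split].
    intros T HT; apply (H2 (fun a => T (f a))), HT.
    intros T HT. apply (H3 (fun n a => T n (f a))). auto.
  - intros U HU. apply Hop. apply (cont_open dA dB); auto.
Qed.

Lemma cont_id {A} dA : cont dA dA (fun a : A => a).
Proof. intros a e He. exists e; auto. Qed.
Lemma cont_comp {A B C} dA dB dC (f : A -> B) (g : B -> C) :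
  cont dA dB f -> cont dB dC g -> cont dA dC (fun a => g (f a)).
Proof.
  intros Hf Hg a e He. destruct (Hg (f a) e He) as (d1 & Hd1 & H1).
  destruct (Hf a d1 Hd1) as (d2 & Hd2 & H2). exists d2; split; auto.
Qed.
Lemma cont_fst {A B} dA dB : cont (prod_dist dA dB) dA (@fst A B).
Proof. intros a e He. exists e; split; auto. intros a' H. unfold prod_dist in H.
  eapply Rle_lt_trans; [apply Rmax_l|eauto]. Qed.
Lemma cont_snd {A B} dA dB : cont (prod_dist dA dB) dB (@snd A B).
Proof. intros a e He. exists e; split; auto. intros a' H. unfold prod_dist in H.
  eapply Rle_lt_trans; [apply Rmax_r|eauto]. Qed.
Lemma cont_pair {A B C} dA dB dC (f : A -> B) (g : A -> C) :
  cont dA dB f -> cont dA dC g -> cont dA (prod_dist dB dC) (fun a => (f a, g a)).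
Proof.
  intros Hf Hg a e He. destruct (Hf a e He) as (d1 & Hd1 & H1).
  destruct (Hg a e He) as (d2 & Hd2 & H2). exists (Rmin d1 d2); split.
  apply Rmin_pos; auto. intros a' H. unfold prod_dist; simpl. apply Rmax_lub_lt.
  apply H1. eapply Rlt_le_trans; eauto; apply Rmin_l.
  apply H2. eapply Rlt_le_trans; eauto; apply Rmin_r.
Qed.
Lemma cont_plus {A} dA (f g : A -> R) : cont dA Rd f -> cont dA Rd g -> cont dA Rd (fun a => f a + g a).
Proof.
  intros Hf Hg a e He. destruct (Hf a (e/2)) as (d1 & Hd1 & H1). lra.
  destruct (Hg a (e/2)) as (d2 & Hd2 & H2). lra. exists (Rmin d1 d2); split.
  apply Rmin_pos; auto. intros a' H. unfold Rd in *.
  assert (K1 := H1 a' ltac:(eapply Rlt_le_trans; eauto; apply Rmin_l)).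
  assert (K2 := H2 a' ltac:(eapply Rlt_le_trans; eauto; apply Rmin_r)).
  replace (f a + g a - (f a' + g a')) with ((f a - f a') + (g a - g a')) by ring.
  eapply Rle_lt_trans; [apply Rabs_triang|lra].
Qed.
Lemma cont_sum {A} dA (f : nat -> A -> R) n : (forall i, cont dA Rd (f i)) ->
  cont dA Rd (fun a => sum_f_R0 (fun i => f i a) n).
Proof. intros H; induction n; simpl; auto. apply cont_plus; auto. Qed.

Lemma borel_eq {A B} dA dB (f g : A -> B) : is_metric dB -> cont dA dB f -> cont dA dB g ->
  borel (metric_open dA) (fun a => f a = g a).
Proof.
  intros (Hpos & H0 & Hsym & Htri) Hf Hg.
  eapply borel_ext; [|apply borel_compl, borel_open].
  - intros a; split; [apply NNPP|]. intros E N; apply N, E.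
  - intros a Hne. set (e := dB (f a) (g a)).
    assert (He : 0 < e). { destruct (Hpos (f a) (g a)); auto. exfalso. apply Hne. apply H0. auto. }
    destruct (Hf a (e/2)) as (d1 & Hd1 & H1). lra.
    destruct (Hg a (e/2)) as (d2 & Hd2 & H2). lra. exists (Rmin d1 d2); split.
    apply Rmin_pos; auto. intros a' H E.
    assert (K1 := H1 a' ltac:(eapply Rlt_le_trans; eauto; apply Rmin_l)).
    assert (K2 := H2 a' ltac:(eapply Rlt_le_trans; eauto; apply Rmin_r)).
    assert (T1 := Htri (f a) (f a') (g a)). rewrite E in T1 at 1.
    rewrite E in K1. assert (T2 := Htri (f a) (g a') (g a)). rewrite (Hsym (g a') (g a)) in T2.
    unfold e in *. lra.
Qed.


Definition qs (n : nat) : R :=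
  let '(a, k) := Cantor.of_nat n in let '(b, c) := Cantor.of_nat k in (INR a - INR b) / INR (S c).

Lemma IZR_split m : IZR m = INR (Z.to_nat m) - INR (Z.to_nat (- m)).
Proof. rewrite !INR_IZR_INZ, <- minus_IZR. f_equal. lia. Qed.

Lemma qs_dense x eps : 0 < eps -> exists n, Rabs (x - qs n) < eps.
Proof.
  intros He. destruct (archimed_cor1 eps He) as (N & HN & HN0).
  destruct N as [|c]; [lia|].
  set (m := up (x * INR (S c))). destruct (archimed (x * INR (S c))) as [A1 A2].
  exists (Cantor.to_nat (Z.to_nat m, Cantor.to_nat (Z.to_nat (- m), c))).
  unfold qs. rewrite !cancel_of_to. rewrite <- IZR_split. fold m in A1, A2.
  assert (Hp : 0 < INR (S c)) by (apply lt_0_INR; lia).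
  replace (x - IZR m / INR (S c)) with ((x * INR (S c) - IZR m) / INR (S c)) by (field; lra).
  unfold Rdiv. rewrite Rabs_mult, Rabs_inv, (Rabs_pos_eq (INR (S c))) by lra.
  apply Rle_lt_trans with (1 * / INR (S c)); [|lra].
  apply Rmult_le_compat_r. left; apply Rinv_0_lt_compat; lra.
  rewrite Rabs_left1 by lra. lra.
Qed.

Lemma Rd_metric : is_metric Rd.
Proof.
  unfold Rd. repeat split.
  - intros; apply Rabs_pos.
  - intros H. destruct (Req_dec x y); auto. exfalso. assert (x - y <> 0) by lra.
    apply Rabs_no_R0 in H1. auto.
  - intros ->. replace (y - y) with 0 by ring. apply Rabs_R0.
  - intros; apply Rabs_minus_sym.
  - intros x y z. replace (x - z) with ((x - y) + (y - z)) by ring. apply Rabs_triang.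
Qed.

Lemma polish_R : polish Rd.
Proof.
  split; [apply Rd_metric|split].
  - intros u Hu. destruct (R_complete u) as [l Hl].
    + intros e He. destruct (Hu e He) as [N HN]. exists N. intros n m Hn Hm. apply HN; lia.
    + exists l. intros e He. destruct (Hl e He) as [N HN]. exists N. intros n Hn. apply HN; lia.
  - exists (fun n => Some (qs n)). intros x e He. destruct (qs_dense x e He) as [n Hn].
    exists n, (qs n). auto.
Qed.

Lemma prod_metric {A B} (dA : A -> A -> R) (dB : B -> B -> R) :
  is_metric dA -> is_metric dB -> is_metric (prod_dist dA dB).
Proof.
  intros (A1 & A2 & A3 & A4) (B1 & B2 & B3 & B4). unfold prod_dist. repeat split.
  - intros; eapply Rle_trans; [apply A1|apply Rmax_l].
  - intros H. destruct x as [a b], y as [a' b']; simpl in *.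
    assert (dA a a' = 0). { apply Rle_antisym; [rewrite <- H; apply Rmax_l|apply A1]. }
    assert (dB b b' = 0). { apply Rle_antisym; [rewrite <- H; apply Rmax_r|apply B1]. }
    apply A2 in H0. apply B2 in H1. congruence.
  - intros ->. rewrite (proj2 (A2 _ _) eq_refl), (proj2 (B2 _ _) eq_refl). apply Rmax_left; lra.
  - intros; rewrite A3, B3; auto.
  - intros x y z. apply Rmax_lub.
    + eapply Rle_trans; [apply A4|]. apply Rplus_le_compat; apply Rmax_l.
    + eapply Rle_trans; [apply B4|]. apply Rplus_le_compat; apply Rmax_r.
Qed.

Lemma polish_prod {A B} (dA : A -> A -> R) (dB : B -> B -> R) :
  polish dA -> polish dB -> polish (prod_dist dA dB).
Proof.
  intros (MA & CA & SA) (MB & CB & SB). split; [apply prod_metric; auto|split].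
  - intros u Hu. destruct (CA (fun n => fst (u n))) as [a Ha].
    { intros e He. destruct (Hu e He) as [N HN]. exists N; intros m n Hm Hn.
      eapply Rle_lt_trans; [apply Rmax_l|apply HN; auto]. }
    destruct (CB (fun n => snd (u n))) as [b Hb].
    { intros e He. destruct (Hu e He) as [N HN]. exists N; intros m n Hm Hn.
      eapply Rle_lt_trans; [apply Rmax_r|apply HN; auto]. }
    exists (a, b). intros e He. destruct (Ha e He) as [N1 H1]. destruct (Hb e He) as [N2 H2].
    exists (N1 + N2)%nat. intros n Hn. unfold prod_dist; simpl. apply Rmax_lub_lt.
    apply H1; lia. apply H2; lia.
  - destruct SA as [ua Hua], SB as [ub Hub].
    exists (fun n => let '(i, j) := Cantor.of_nat n in
              match ua i, ub j with Some a, Some b => Some (a, b) | _, _ => None end).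
    intros [a b] e He. destruct (Hua a e He) as (i & a' & Ei & Ha).
    destruct (Hub b e He) as (j & b' & Ej & Hb). exists (Cantor.to_nat (i, j)), (a', b').
    rewrite cancel_of_to, Ei, Ej. split; auto. unfold prod_dist; simpl. apply Rmax_lub_lt; auto.
Qed.


Fixpoint ldist {E} (dE : E -> E -> R) (l m : list E) : R :=
  match l, m with
  | [], [] => 0
  | a :: l', b :: m' => Rmax (Rmin 1 (dE a b)) (ldist dE l' m')
  | _, _ => 1
  end.

Lemma Rmin1_le x : Rmin 1 x <= 1. Proof. apply Rmin_l. Qed.
Lemma Rmin1_lt x : Rmin 1 x < 1 -> Rmin 1 x = x.
Proof. unfold Rmin; destruct (Rle_dec 1 x); lra. Qed.

Lemma ldist_le1 {E} (dE : E -> E -> R) l m : ldist dE l m <= 1.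
Proof. revert m; induction l; destruct m; simpl; try lra. apply Rmax_lub; auto. apply Rmin_l. Qed.

Lemma ldist_nonneg {E} (dE : E -> E -> R) : (forall a b, 0 <= dE a b) -> forall l m, 0 <= ldist dE l m.
Proof.
  intros H l; induction l; destruct m; simpl; try lra.
  eapply Rle_trans; [|apply Rmax_l]. unfold Rmin; destruct (Rle_dec 1 (dE a e)); auto; lra.
Qed.

Lemma ldist_len {E} (dE : E -> E -> R) l m : ldist dE l m < 1 -> length l = length m.
Proof.
  revert m; induction l; destruct m; simpl; intros H; try lra; auto.
  f_equal. apply IHl. eapply Rle_lt_trans; [apply Rmax_r|eauto].
Qed.

Lemma ldist_nth {E} (dE : E -> E -> R) e0 : dE e0 e0 = 0 -> forall l m i, ldist dE l m < 1 ->
  dE (nth i l e0) (nth i m e0) <= ldist dE l m.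
Proof.
  intros H0 l; induction l; destruct m; simpl; intros i H; try lra.
  - destruct i; rewrite H0; lra.
  - destruct i.
    + apply Rle_trans with (Rmin 1 (dE a e)); [|apply Rmax_l].
      right; symmetry; apply Rmin1_lt. eapply Rle_lt_trans; [apply Rmax_l|eauto].
    + eapply Rle_trans; [apply IHl|apply Rmax_r]. eapply Rle_lt_trans; [apply Rmax_r|eauto].
Qed.

Lemma cont_nth {E} (dE : E -> E -> R) e0 i : dE e0 e0 = 0 -> cont (ldist dE) dE (fun l => nth i l e0).
Proof.
  intros H0 l e He. exists (Rmin e 1); split. apply Rmin_pos; lra.
  intros m Hm. assert (Hm1 : ldist dE l m < 1) by (eapply Rlt_le_trans; eauto; apply Rmin_r).
  eapply Rle_lt_trans; [apply ldist_nth; auto|]. eapply Rlt_le_trans; [exact Hm|apply Rmin_l].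
Qed.

Lemma len_open {E} (dE : E -> E -> R) k : metric_open (ldist dE) (fun l => length l = k).
Proof. intros l Hl. exists 1; split; [lra|]. intros m Hm. apply ldist_len in Hm. congruence. Qed.

Lemma ldist_metric {E} (dE : E -> E -> R) : is_metric dE -> is_metric (ldist dE).
Proof.
  intros (P & Z & S & T). repeat split.
  - apply ldist_nonneg; auto.
  - revert y; induction x; destruct y; simpl; intros H; try lra; auto.
    assert (H1 : Rmin 1 (dE a e) = 0).
    { apply Rle_antisym. rewrite <- H; apply Rmax_l. unfold Rmin; destruct Rle_dec; auto; lra. }
    assert (H2 : ldist dE x y = 0).
    { apply Rle_antisym. rewrite <- H; apply Rmax_r. apply ldist_nonneg; auto. }
    rewrite Rmin1_lt in H1 by lra. apply Z in H1. f_equal; auto.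
  - intros <-. induction x; simpl; auto. rewrite IHx, (proj2 (Z a a) eq_refl).
    unfold Rmin, Rmax; destruct Rle_dec; destruct Rle_dec; lra.
  - intros x y; revert y; induction x; destruct y; simpl; auto. rewrite S, IHx; auto.
  - assert (CN : forall a b l m, 0 <= Rmax (Rmin 1 (dE a b)) (ldist dE l m)).
    { intros. eapply Rle_trans; [apply (ldist_nonneg dE P)|apply Rmax_r]. }
    assert (CL : forall a b l m, Rmax (Rmin 1 (dE a b)) (ldist dE l m) <= 1).
    { intros. apply Rmax_lub. apply Rmin_l. apply ldist_le1. }
    intros x y z. revert y z; induction x; destruct y, z; simpl;
      try (repeat match goal with |- context[Rmax (Rmin 1 (dE ?a ?b)) (ldist dE ?l ?m)] =>
        generalize (CN a b l m) (CL a b l m); generalize (Rmax (Rmin 1 (dE a b)) (ldist dE l m)); intros end; lra).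
    apply Rmax_lub.
    + assert (Ht := T a e e0). assert (Pa := P a e). assert (Pb := P e e0).
      apply Rle_trans with (Rmin 1 (dE a e) + Rmin 1 (dE e e0)).
      { unfold Rmin. repeat destruct Rle_dec; lra. }
      apply Rplus_le_compat; apply Rmax_l.
    + eapply Rle_trans; [apply IHx|]. apply Rplus_le_compat; apply Rmax_r.
Qed.

Lemma lcomplete_k {E} (dE : E -> E -> R) : complete dE ->
  forall k (u : nat -> list E), (forall n, length (u n) = k) -> cauchy_seq (ldist dE) u ->
  exists l, converges_to (ldist dE) u l.
Proof.
  intros CE k. induction k; intros u Hl Hu.
  - exists []. intros e He. exists 0%nat. intros n _. specialize (Hl n).
    apply length_zero_iff_nil in Hl. rewrite Hl. simpl. lra.
  - assert (e : E). { specialize (Hl 0%nat). destruct (u 0%nat); [discriminate|exact e]. }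
    set (h := fun n => hd e (u n)). set (t := fun n => tl (u n)).
    assert (Hht : forall n, u n = h n :: t n).
    { intros n; unfold h, t; specialize (Hl n); destruct (u n); [discriminate|reflexivity]. }
    destruct (CE h) as [a Ha].
    { intros eps He. destruct (Hu (Rmin eps 1)) as [N HN]. apply Rmin_pos; lra.
      exists N; intros m n Hm Hn. specialize (HN m n Hm Hn). rewrite !Hht in HN. simpl in HN.
      assert (K : Rmin 1 (dE (h m) (h n)) < Rmin eps 1) by (eapply Rle_lt_trans; [apply Rmax_l|eauto]).
      rewrite Rmin1_lt in K. eapply Rlt_le_trans; [exact K|apply Rmin_l].
      eapply Rlt_le_trans; [exact K|apply Rmin_r]. }
    destruct (IHk t) as [l Hlim].
    { intros n. specialize (Hl n). rewrite Hht in Hl. simpl in Hl. lia. }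
    { intros eps He. destruct (Hu eps He) as [N HN]. exists N; intros m n Hm Hn.
      specialize (HN m n Hm Hn). rewrite !Hht in HN. simpl in HN.
      eapply Rle_lt_trans; [apply Rmax_r|eauto]. }
    exists (a :: l). intros eps He. destruct (Ha eps He) as [N1 H1]. destruct (Hlim eps He) as [N2 H2].
    exists (N1 + N2)%nat. intros n Hn. rewrite Hht. simpl. apply Rmax_lub_lt.
    + eapply Rle_lt_trans; [apply Rmin_r|]. apply H1; lia.
    + apply H2; lia.
Qed.

Lemma lcomplete {E} (dE : E -> E -> R) : is_metric dE -> complete dE -> complete (ldist dE).
Proof.
  intros ME CE u Hu. destruct (Hu 1) as [N HN]; [lra|].
  set (v := fun n => u (N + n)%nat).
  destruct (lcomplete_k dE CE (length (u N)) v) as [l Hl].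
  - intros n. unfold v. symmetry. apply (ldist_len dE). apply HN; lia.
  - intros e He. destruct (Hu e He) as [M HM]. exists M. intros m n Hm Hn. apply HM; lia.
  - exists l. intros e He. destruct (Hl e He) as [M HM]. exists (N + M)%nat. intros n Hn.
    replace n with (N + (n - N))%nat by lia. apply (HM (n - N)%nat). lia.
Qed.

Fixpoint seqk {E} (uE : nat -> option E) (k : nat) (n : nat) : option (list E) :=
  match k with
  | O => Some []
  | S k' => let '(i, j) := Cantor.of_nat n in
      match uE i, seqk uE k' j with Some a, Some t => Some (a :: t) | _, _ => None end
  end.

Lemma lseparable {E} (dE : E -> E -> R) : separable dE -> separable (ldist dE).
Proof.
  intros [uE HuE].
  exists (fun n => let '(k, m) := Cantor.of_nat n in seqk uE k m).
  intros l e He.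
  assert (Hk : exists m y, seqk uE (length l) m = Some y /\ ldist dE l y < e).
  { induction l as [|a l IH].
    - exists 0%nat, []. simpl. split; auto.
    - destruct IH as (j & t & Ej & Ht). destruct (HuE a e He) as (i & a' & Ei & Ha).
      exists (Cantor.to_nat (i, j)), (a' :: t). cbn [length seqk]. rewrite cancel_of_to, Ei, Ej. split; auto. simpl.
      apply Rmax_lub_lt; auto. eapply Rle_lt_trans; [apply Rmin_r|auto]. }
  destruct Hk as (m & y & Ey & Hy). exists (Cantor.to_nat (length l, m)), y.
  rewrite cancel_of_to. auto.
Qed.

Lemma polish_list {E} (dE : E -> E -> R) : polish dE -> polish (ldist dE).
Proof.
  intros (M & C & S). split; [apply ldist_metric; auto|split].
  apply lcomplete; auto. apply lseparable; auto.
Qed.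


Lemma ball_open c dl : metric_open Rd (fun x => Rabs (x - c) < dl).
Proof.
  intros x Hx. exists (dl - Rabs (x - c)); split; [lra|]. intros y Hy. unfold Rd in Hy.
  replace (y - c) with ((y - x) + (x - c)) by ring. eapply Rle_lt_trans; [apply Rabs_triang|].
  rewrite Rabs_minus_sym in Hy. lra.
Qed.

Lemma eball_open c dl : ereal_open (fun e => exists s, e = Fin s /\ Rabs (s - c) < dl).
Proof.
  split.
  - intros r (s & Hs & H). injection Hs as ->. exists (dl - Rabs (s - c)); split; [lra|].
    intros s' Hs'. exists s'; split; auto.
    replace (s' - c) with ((s' - s) + (s - c)) by ring. eapply Rle_lt_trans; [apply Rabs_triang|]. lra.
  - intros (s & Hs & _). discriminate.
Qed.

Lemma borel_graph {Y} (dY : Y -> Y -> R) (f : Y -> ereal) :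
  (forall B, borel ereal_open B -> borel (metric_open dY) (fun y => B (f y))) ->
  borel (metric_open (prod_dist dY Rd)) (fun q => f (fst q) = Fin (snd q)).
Proof.
  intros Hf.
  eapply borel_ext; [|apply (borel_cinter _ (fun n q => exists j,
      (exists s, f (fst q) = Fin s /\ Rabs (s - qs j) < / INR (S n)) /\ Rabs (snd q - qs j) < / INR (S n)))].
  - intros [y r]; cbn [fst snd]. split.
    + intros H. destruct (f y) as [s|] eqn:Ef; [|exfalso].
      * f_equal. apply NNPP; intros Hne.
        assert (Hp : 0 < Rabs (s - r) / 2) by (assert (s - r <> 0) by lra; apply Rabs_pos_lt in H0; lra).
        destruct (archimed_cor1 _ Hp) as (N & HN & HN0). destruct N as [|n]; [lia|].
        destruct (H n) as (j & (s' & Es & H1) & H2). injection Es as <-.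
        assert (Rabs (s - r) <= Rabs (s - qs j) + Rabs (r - qs j)).
        { replace (s - r) with ((s - qs j) + (qs j - r)) by ring. rewrite (Rabs_minus_sym r). apply Rabs_triang. }
        lra.
      * destruct (H 0%nat) as (j & (s & Es & _) & _). discriminate.
    + intros Hy n. assert (Hp : 0 < / INR (S n)) by (apply Rinv_0_lt_compat, lt_0_INR; lia).
      destruct (qs_dense r _ Hp) as [j Hj]. exists j. split; [exists r; split; auto|auto].
  - intros n. apply borel_cunion. intros j. apply borel_inter2.
    + apply (borel_pre _ dY fst (fun y => exists s, f y = Fin s /\ Rabs (s - qs j) < / INR (S n))).
      apply cont_fst. apply (Hf (fun e => exists s, e = Fin s /\ Rabs (s - qs j) < / INR (S n))).
      apply borel_open, eball_open.
    + apply (borel_pre _ Rd snd (fun x => Rabs (x - qs j) < / INR (S n))).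
      apply cont_snd. apply borel_open, ball_open.
Qed.


Lemma analytic_empty {Y} (dY : Y -> Y -> R) (A : Y -> Prop) : (forall y, ~ A y) -> analytic dY A.
Proof.
  intros HA. exists unit, (fun _ _ => 0). split.
  - split; [|split].
    + repeat split; intros; try lra. destruct x, y; auto.
    + intros u _. exists tt. intros e He. exists 0%nat. intros. lra.
    + exists (fun _ => Some tt). intros [] e He. exists 0%nat, tt. auto.
  - exists (fun _ => False). split. apply borel_False. intros y; split; [intros H; now apply HA in H|].
    intros [_ []].
Qed.

Lemma part2 {X} (d : X -> X -> R) (dL : X -> X -> ereal) (HX : polish d) (HB : borel_fun d dL)
  (G : X * X -> Prop) (Hfin : forall p, G p -> dL (fst p) (snd p) <> PInf) :
  analytic (prod_dist d d) G -> analytic (prod_dist d d) (Gprime dL G).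
Proof.
  intros (Z0 & dZ0 & PZ0 & B0 & HB0 & HG).
  destruct (classic (exists p z, B0 (p, z))) as [[p0 [z0 Hz0]] | Hno].
  2:{ apply analytic_empty. intros p (I & w & z & HGw & _). apply Hno.
      destruct (proj1 (HG _) (HGw 0%nat ltac:(lia))) as [z' Hz']. eauto. }
  set (E := (((X*X)*Z0) * (R*R))%type).
  set (dE := prod_dist (prod_dist (prod_dist d d) dZ0) (prod_dist Rd Rd)).
  set (e0 := ((p0, z0), (0, 0)) : E).
  assert (PE : polish dE).
  { unfold dE. repeat apply polish_prod; auto using polish_R. }
  assert (He0 : dE e0 e0 = 0) by (destruct PE as ((_ & Z & _) & _); apply Z; auto).
  set (P := prod_dist (prod_dist d d) (ldist dE)).
  set (nthq := fun i (q : (X*X) * list E) => nth i (snd q) e0).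
  set (Wq := fun i q => fst (fst (fst (nthq i q)))).
  set (Zq := fun i q => snd (fst (fst (nthq i q)))).
  set (Rq := fun i q => fst (snd (nthq i q))).
  set (Sq := fun i q => snd (snd (nthq i q))).
  assert (c_nth : forall i, cont P dE (nthq i)).
  { intros i. apply (cont_comp P (ldist dE) dE snd (fun l => nth i l e0)); [apply cont_snd|apply cont_nth; auto]. }
  assert (c_B : forall i, cont P (prod_dist (prod_dist d d) dZ0) (fun q => fst (nthq i q))).
  { intros i. apply (cont_comp P dE _ (nthq i) fst); [apply c_nth|apply cont_fst]. }
  assert (c_W : forall i, cont P d (Wq i)).
  { intros i. apply (cont_comp P (prod_dist (prod_dist d d) dZ0) d (fun q => fst (nthq i q)) (fun x => fst (fst x))); [apply c_B|].
    apply (cont_comp (prod_dist (prod_dist d d) dZ0) (prod_dist d d) d fst fst); apply cont_fst. }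
  assert (c_Z : forall i, cont P d (Zq i)).
  { intros i. apply (cont_comp P (prod_dist (prod_dist d d) dZ0) d (fun q => fst (nthq i q)) (fun x => snd (fst x))); [apply c_B|].
    apply (cont_comp (prod_dist (prod_dist d d) dZ0) (prod_dist d d) d fst snd); [apply cont_fst|apply cont_snd]. }
  assert (c_R : forall i, cont P Rd (Rq i)).
  { intros i. apply (cont_comp P dE Rd (nthq i) (fun x => fst (snd x))); [apply c_nth|].
    apply (cont_comp dE (prod_dist Rd Rd) Rd snd fst); [apply cont_snd|apply cont_fst]. }
  assert (c_S : forall i, cont P Rd (Sq i)).
  { intros i. apply (cont_comp P dE Rd (nthq i) (fun x => snd (snd x))); [apply c_nth|].
    apply (cont_comp dE (prod_dist Rd Rd) Rd snd snd); apply cont_snd. }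
  assert (c_cyc : forall k i, cont P d (fun q => cyc_next (fun j => Wq j q) k i)).
  { intros k i. unfold cyc_next. destruct (Nat.eqb i k); apply c_W. }
  assert (Hgraph := borel_graph (prod_dist d d) (fun p => dL (fst p) (snd p)) HB).
  set (Cond := fun k i q => B0 (fst (nthq i q)) /\
      (dL (cyc_next (fun j => Wq j q) k i) (Zq i q) = Fin (Rq i q) /\ dL (Wq i q) (Zq i q) = Fin (Sq i q))).
  set (Bp := fun q : (X*X) * list E => exists k, length (snd q) = S k /\
      ((forall i, (i <= k)%nat -> Cond k i q) /\ (Wq 0%nat q = fst (fst q) /\ (Zq k q = snd (fst q) /\
        sum_f_R0 (fun i => Rq i q) k = sum_f_R0 (fun i => Sq i q) k)))).
  exists (list E), (ldist dE). split; [apply polish_list; auto|].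
  exists Bp. split.
  - apply borel_cunion. intros k. apply borel_inter2; [|apply borel_inter2; [|apply borel_inter2; [|apply borel_inter2]]].
    + apply (borel_pre P (ldist dE) snd (fun l => length l = S k)). apply cont_snd.
      apply borel_open, len_open.
    + apply borel_cinter. intros i. destruct (le_dec i k) as [Hi|Hi].
      * eapply borel_ext; [|apply borel_inter2; [|apply borel_inter2]].
        -- intros q. split; [intros H _; exact H|intros H; exact (H Hi)].
        -- apply (borel_pre P (prod_dist (prod_dist d d) dZ0) _ B0); auto.
        -- apply (borel_pre P (prod_dist (prod_dist d d) Rd) (fun q => ((cyc_next (fun j => Wq j q) k i, Zq i q), Rq i q))
              (fun q' => dL (fst (fst q')) (snd (fst q')) = Fin (snd q'))); auto.
           apply cont_pair; auto. apply cont_pair; auto.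
        -- apply (borel_pre P (prod_dist (prod_dist d d) Rd) (fun q => ((Wq i q, Zq i q), Sq i q))
              (fun q' => dL (fst (fst q')) (snd (fst q')) = Fin (snd q'))); auto.
           apply cont_pair; auto. apply cont_pair; auto.
      * eapply borel_ext; [|apply borel_True]. intros q; split; auto. intros _ H; lia.
    + apply borel_eq with (dB := d). apply HX. auto.
      eapply cont_comp; apply cont_fst.
    + apply borel_eq with (dB := d). apply HX. auto.
      eapply cont_comp; [apply cont_fst|apply cont_snd].
    + apply borel_eq with (dB := Rd). apply Rd_metric. apply cont_sum; auto. apply cont_sum; auto.
  - intros p. split.
    + intros (I & w & z & HGw & H0 & HI & Heq).
      assert (Hr := gprime_terms_fin dL G Hfin I w z HGw Heq).
      assert (HC : forall i, exists e : E, (i <= I)%nat -> (fst (fst e) = (w i, z i) /\ B0 (fst e) /\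
         dL (cyc_next w I i) (z i) = Fin (fst (snd e)) /\ dL (w i) (z i) = Fin (snd (snd e)))).
      { intros i. destruct (le_dec i I) as [Hi|Hi]; [|exists e0; intros; lia].
        destruct (proj1 (HG _) (HGw i Hi)) as [zeta Hzeta].
        specialize (Hr i Hi). destruct (dL (cyc_next w I i) (z i)) as [r|] eqn:Er; [|congruence].
        specialize (Hfin _ (HGw i Hi)). simpl in Hfin.
        destruct (dL (w i) (z i)) as [s|] eqn:Es; [|congruence].
        exists (((w i, z i), zeta), (r, s)). intros _. simpl. auto. }
      set (ef := fun i => proj1_sig (constructive_indefinite_description _ (HC i))).
      assert (Hef : forall i, (i <= I)%nat -> (fst (fst (ef i)) = (w i, z i) /\ B0 (fst (ef i)) /\
         dL (cyc_next w I i) (z i) = Fin (fst (snd (ef i))) /\ dL (w i) (z i) = Fin (snd (snd (ef i))))).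
      { intros i. exact (proj2_sig (constructive_indefinite_description _ (HC i))). }
      clearbody ef.
      set (l := map ef (seq 0 (S I))).
      assert (Hnth : forall i, (i <= I)%nat -> nthq i (p, l) = ef i).
      { intros i Hi. unfold nthq, l. cbn [snd]. rewrite (nth_indep _ e0 (ef 0%nat)).
        rewrite map_nth, seq_nth by lia. reflexivity. rewrite length_map, length_seq. lia. }
      assert (HW : forall i, (i <= I)%nat -> Wq i (p, l) = w i /\ Zq i (p, l) = z i).
      { intros i Hi. unfold Wq, Zq. rewrite Hnth by auto. destruct (Hef i Hi) as (-> & _). auto. }
      assert (Hcyc : forall i, (i <= I)%nat -> cyc_next (fun j => Wq j (p, l)) I i = cyc_next w I i).
      { intros i Hi. unfold cyc_next. destruct (Nat.eqb_spec i I); apply HW; lia. }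
      exists l, I. split; [unfold l; simpl; now rewrite length_map, length_seq|].
      split; [|split; [|split]].
      * intros i Hi. unfold Cond. rewrite Hcyc by auto. destruct (HW i Hi) as [-> ->].
        unfold Rq, Sq. rewrite Hnth by auto. destruct (Hef i Hi) as (_ & ? & ? & ?). auto.
      * simpl. rewrite <- H0. apply HW; lia.
      * simpl. rewrite <- HI. apply HW; lia.
      * rewrite (esum_fin _ (fun i => Rq i (p, l))) in Heq.
        rewrite (esum_fin _ (fun i => Sq i (p, l))) in Heq. congruence.
        -- intros i Hi. unfold Sq. rewrite Hnth by auto. apply Hef; auto.
        -- intros i Hi. unfold Rq. rewrite Hnth by auto. apply Hef; auto.
    + intros (l & k & Hlen & Hc & Hw0 & Hzk & Hsum).
      exists k, (fun j => Wq j (p, l)), (fun j => Zq j (p, l)). split; [|split; [|split]].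
      * intros i Hi. destruct (Hc i Hi) as (H1 & _). apply HG. unfold Wq, Zq.
        destruct (nthq i (p, l)) as [[[w z] zeta] rs]. exists zeta. exact H1.
      * exact Hw0.
      * exact Hzk.
      * rewrite (esum_fin _ (fun i => Rq i (p, l))), (esum_fin _ (fun i => Sq i (p, l))).
        congruence.
        -- intros i Hi. apply Hc; auto.
        -- intros i Hi. apply Hc; auto.
Qed.


Theorem lemma3p1 (X : Type) (d : X -> X -> R) (dL : X -> X -> ereal)
  (HX : polish d) (HdL : ext_distance dL) (HB : borel_fun d dL)
  (G : X * X -> Prop)
  (Hfin : forall p, G p -> dL (fst p) (snd p) <> PInf) :
  ((forall p, G p -> Gprime dL G p) /\
   (forall p, Gprime dL G p -> dL (fst p) (snd p) <> PInf)) /\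
  (analytic (prod_dist d d) G -> analytic (prod_dist d d) (Gprime dL G)) /\
  (cyc_mono dL G -> cyc_mono dL (Gprime dL G)).
Proof.
  split; [split|split].
  - intros p; apply part1a.
  - intros p; apply part1b; auto.
  - apply part2; auto.
  - apply part3; auto.
Qed.
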